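(* If the Block MDP $\Phi$ is $\gamma$-separable (for some $\gamma>0$ and some full-support distribution $\nu$ on $\mathcal S\times\mathcal A$), then $I(\Phi)>0$, i.e. $I(x;\Phi)>0$ for every context $x\in\mathcal X$.
   Context: Block MDP $\Phi=(p,q,f)$: finite $\mathcal S$, $\mathcal X$ ($|\mathcal X|=n$), $\mathcal A$, horizon $H\ge2$, initial distribution $\mu$, latent transitions $p(s'|s,a)$ (positive), decoding $f$, emissions $q(\cdot|s)$ supported on $f^{-1}(s)$, behavior policy $\pi$. For $\nu\in\mathcal P(\mathcal S\times\mathcal A)$ with full support define $b_\nu(s,a|s')=\frac{p(s'|s,a)\nu(s,a)}{\sum_{\tilde s,\tilde a}p(s'|\tilde s,\tilde a)\nu(\tilde s,\tilde a)}$ and $\mathbf b_\nu(s')=(b_\nu(s,a|s'))_{(s,a)}$. $\Phi$ is $\gamma$-separable if $\|\mathbf b_\nu(s')-\mathbf b_\nu(s'')\|_1\ge\gamma$ for all $s'\ne s''$. Rate function: for $x$, $i=f(x)$, $j\ne i$, $c>0$, $\Psi_j=(p,\tilde q,g)$ with $g(x)=j$, $g=f$ elsewhere, $\tilde q(x|j)=c\,q(x|i)$, $\tilde q(y|j)=(1-c\,q(x|i))q(y|j)$ on $f^{-1}(j)$, $\tilde q(y|i)=q(y|i)/(1-q(x|i))$ on $f^{-1}(i)\setminus\{x\}$, $\tilde q=q$ otherwise; $m(s,a)=\frac1{H-1}\sum_{h<H}\mathbb P_{\Psi_j}[g(x_h)=s,a_h=a]$ under $\pi$; $I_j(x;c,\Phi)=n\sum_{a,s}\{c\,q(x|i)p(j|s,a)m(s,a)\log\frac{c\,p(j|s,a)}{p(i|s,a)}+c\,q(x|i)m(j,a)p(s|j,a)\log\frac{p(s|j,a)}{p(s|i,a)}+(1-c\,q(x|i)p(j|s,a))m(s,a)\log\frac{1-c\,q(x|i)p(j|s,a)}{1-q(x|i)p(i|s,a)}\}$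 ($+\infty$ if invalid); $I(x;\Phi)=\min_{j\ne f(x)}\inf_{c>0}I_j(x;c,\Phi)$. The condition $I(\Phi)>0$ means $I(x;\Phi)>0$ for all $x$. *)

(* Defs.v *)
From HB Require Import structures.
From mathcomp Require Import all_boot all_order all_algebra.
From mathcomp Require Import all_classical all_reals all_analysis.
Set Implicit Arguments. Unset Strict Implicit. Unset Printing Implicit Defensive.
Import Order.TTheory GRing.Theory Num.Theory.
Local Open Scope ring_scope.

Section BlockMDP.
Variables (R : realType) (S A X : finType).

Definition is_dist (T : finType) (d : T -> R) :=
  (forall t, 0 <= d t) /\ \sum_t d t = 1.

(* Block MDP Phi = (p,q,f) with initial distribution mu (on latent states)
   and behavior policy pi(a|x) (on contexts).
   p s a s' = p(s'|s,a);  q s y = q(y|s);  pi y a = pi(a|y). *)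
Definition block_mdp (mu : S -> R) (p : S -> A -> S -> R) (q : S -> X -> R)
    (f : X -> S) (pi : X -> A -> R) :=
  is_dist mu /\
  (forall s a, is_dist (p s a)) /\
  (forall s a s', 0 < p s a s') /\
  (forall s, is_dist (q s)) /\
  (forall s y, f y != s -> q s y = 0) /\
  (forall y, is_dist (pi y)).

Definition bnu (p : S -> A -> S -> R) (nu : S -> A -> R) (s' : S) (s : S) (a : A) : R :=
  p s a s' * nu s a / \sum_(t : S) \sum_(b : A) p t b s' * nu t b.

Definition separable (p : S -> A -> S -> R) (nu : S -> A -> R) (gamma : R) :=
  forall s' s'' : S, s' != s'' ->
    gamma <= \sum_(s : S) \sum_(a : A) `| bnu p nu s' s a - bnu p nu s'' s a |.

Definition full_support_dist (nu : S -> A -> R) :=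
  (forall s a, 0 < nu s a) /\ \sum_(s : S) \sum_(a : A) nu s a = 1.

Definition qtilde (q : S -> X -> R) (f : X -> S) (x : X) (j : S) (c : R)
    (s : S) (y : X) : R :=
  let i := f x in
  if s == j then
    (if y == x then c * q i x
     else if f y == j then (1 - c * q i x) * q j y else q s y)
  else if s == i then
    (if y == x then 0
     else if f y == i then q i y / (1 - q i x) else q s y)
  else q s y.

Definition gdec (f : X -> S) (x : X) (j : S) (y : X) : S :=
  if y == x then j else f y.

(* Joint law of (s_h, x_h) of a block MDP (mu, p, qq, pi); step h is
   indexed from 0 (i.e. [marg k] is the law at time h = k+1). *)
Fixpoint marg (mu : S -> R) (p : S -> A -> S -> R) (qq : S -> X -> R)
    (pi : X -> A -> R) (k : nat) : S -> X -> R :=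
  match k with
  | 0 => fun s y => mu s * qq s y
  | k'.+1 => fun s' y' =>
      \sum_(s : S) \sum_(y : X) \sum_(a : A)
        marg mu p qq pi k' s y * pi y a * p s a s' * qq s' y'
  end.

Definition prob_dec_act (mu : S -> R) (p : S -> A -> S -> R) (qq : S -> X -> R)
    (g : X -> S) (pi : X -> A -> R) (k : nat) (s : S) (a : A) : R :=
  \sum_(s0 : S) \sum_(y : X | g y == s) marg mu p qq pi k s0 y * pi y a.

Definition mvisit (H : nat) (mu : S -> R) (p : S -> A -> S -> R)
    (qq : S -> X -> R) (g : X -> S) (pi : X -> A -> R) (s : S) (a : A) : R :=
  (H.-1)%:R^-1 * \sum_(k < H.-1) prob_dec_act mu p qq g pi k s a.

Local Open Scope ereal_scope.

(* I_j(x; c, Phi), +oo when Psi_j is not a valid model (c q(x|i) > 1) *)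
Definition Irate_j (H : nat) (mu : S -> R) (p : S -> A -> S -> R)
    (q : S -> X -> R) (f : X -> S) (pi : X -> A -> R) (x : X) (j : S) (c : R)
    : \bar R :=
  let i := f x in
  let qx := q i x in
  let m := mvisit H mu p (qtilde q f x j c) (gdec f x j) pi in
  if (c * qx <= 1)%R then
    ((#|X|)%:R * \sum_(a : A) \sum_(s : S)
       (c * qx * p s a j * m s a * ln (c * p s a j / p s a i)
        + c * qx * m j a * p j a s * ln (p j a s / p i a s)
        + (1 - c * qx * p s a j) * m s a
            * ln ((1 - c * qx * p s a j) / (1 - qx * p s a i))))%R%:E
  else +oo.

Definition Irate (H : nat) (mu : S -> R) (p : S -> A -> S -> R)
    (q : S -> X -> R) (f : X -> S) (pi : X -> A -> R) (x : X) : \bar R :=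
  \big[Order.min/+oo]_(j : S | j != f x)
     ereal_inf [set Irate_j H mu p q f pi x j c | c in [set c : R | (0 < c)%R]].

End BlockMDP.

(* Main.v *)
Require Import Defs.
From HB Require Import structures.
From mathcomp Require Import all_boot all_order all_algebra.
From mathcomp Require Import all_classical all_reals all_analysis.
From mathcomp Require Import ring lra.
Import Order.TTheory GRing.Theory Num.Theory.
Local Open Scope ring_scope.


Lemma ln_le_sub1 (R : realType) (t : R) : 0 < t -> ln t <= t - 1.
Proof.
move=> t0; have := @le_ln1Dx R (t - 1); rewrite addrCA subrr addr0; apply; lra.
Qed.

Lemma xlnx_lb (R : realType) (P Q : R) : 0 <= P -> 0 < Q ->
  2 * P - 2 * (Num.sqrt P * Num.sqrt Q) <= P * ln (P / Q).
Proof.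
move=> P0 Q0; have [->|Pp] := eqVneq P 0.
  by rewrite sqrtr0 !mul0r mulr0 subrr.
have Ppos : 0 < P by rewrite lt0r Pp.
have sP : 0 < Num.sqrt P by rewrite sqrtr_gt0.
have sQ : 0 < Num.sqrt Q by rewrite sqrtr_gt0.
set t := Num.sqrt Q / Num.sqrt P.
have t0 : 0 < t by rewrite divr_gt0.
have e1 : P / Q = (t ^+ 2)^-1.
  rewrite /t expr_div_n !sqr_sqrtr ?ltW // invf_div //.
have hl : ln (P / Q) = - (ln t *+ 2).
  by rewrite e1 lnV ?posrE ?exprn_gt0 // lnXn.
have := @ln_le_sub1 R t t0; rewrite hl => h.
have eP : P * t = Num.sqrt P * Num.sqrt Q.
  rewrite /t -{1}(sqr_sqrtr (ltW Ppos)); field; rewrite gt_eqF //.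
rewrite -eP mulrN.
have : P * (ln t *+ 2) <= P * ((t - 1) *+ 2) by rewrite ler_pM2l // lerMn2r.
rewrite !mulrnAr; lra.
Qed.

Lemma bern_lb (R : realType) (al be : R) : 0 <= al <= 1 -> 0 < be < 1 ->
  (Num.sqrt al - Num.sqrt be) ^+ 2 <=
  al * ln (al / be) + (1 - al) * ln ((1 - al) / (1 - be)).
Proof.
case/andP=> a0 a1 /andP[b0 b1].
have h1 := @xlnx_lb R al be a0 b0.
have h2 := @xlnx_lb R (1 - al) (1 - be) ltac:(lra) ltac:(lra).
have s1 := sqr_sqrtr a0; have s2 := sqr_sqrtr (ltW b0).
have s3 : Num.sqrt (1 - al) ^+ 2 = 1 - al by rewrite sqr_sqrtr //; lra.
have s4 : Num.sqrt (1 - be) ^+ 2 = 1 - be by rewrite sqr_sqrtr //; lra.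
have q : 0 <= (Num.sqrt (1 - al) - Num.sqrt (1 - be)) ^+ 2 by apply: sqr_ge0.
move: q s1 s2 s3 s4 h1 h2.
set A := Num.sqrt al; set B := Num.sqrt be; set C := Num.sqrt (1 - al); set D := Num.sqrt (1 - be).
move=> q s1 s2 s3 s4 h1 h2.
rewrite !expr2 in q s1 s2 s3 s4 *.
nra.
Qed.

Lemma kl_lb (R : realType) (T : finType) (P Q : T -> R) :
  (forall t, 0 <= P t) -> (forall t, 0 < Q t) ->
  \sum_t P t = 1 -> \sum_t Q t = 1 ->
  \sum_t (Num.sqrt (P t) - Num.sqrt (Q t)) ^+ 2 <= \sum_t P t * ln (P t / Q t).
Proof.
move=> P0 Q0 sP sQ.
have e : \sum_t (Num.sqrt (P t) - Num.sqrt (Q t)) ^+ 2 =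
   \sum_t (2 * P t - 2 * (Num.sqrt (P t) * Num.sqrt (Q t))) + (\sum_t Q t - \sum_t P t).
  rewrite -sumrB -big_split /=; apply: eq_bigr => t _.
  rewrite sqrrB (sqr_sqrtr (P0 t)) (sqr_sqrtr (ltW (Q0 t))); ring.
rewrite e sP sQ subrr addr0; apply: ler_sum => t _; exact: xlnx_lb.
Qed.

Lemma quad_lemma (R : realType) (S A : finType) (i j : S) (a0 : A)
   (al be : S -> A -> R) (E : R) :
  j != i -> (forall s a, 0 < al s a) -> (forall s a, 0 < be s a) -> 0 <= E ->
  (exists2 d : R, 0 < d & forall u : R,
     d <= \sum_a \sum_(s | s != i) (u * al s a - be s a) ^+ 2 + u ^+ 2 * E)
  \/ (exists2 u0 : R, 0 < u0 & (forall s a, s != i -> u0 * al s a = be s a) /\ E = 0).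
Proof.
move=> ji alp bep E0.
set F := fun u : R => \sum_a \sum_(s | s != i) (u * al s a - be s a) ^+ 2 + u ^+ 2 * E.
set cA := \sum_a \sum_(s | s != i) al s a ^+ 2 + E.
set cB := \sum_a \sum_(s | s != i) al s a * be s a.
set cC := \sum_a \sum_(s | s != i) be s a ^+ 2.
have eF : forall u, F u = cA * u ^+ 2 - 2 * cB * u + cC.
  move=> u; rewrite /F /cA /cB /cC.
  have h1 : (\sum_a \sum_(s | s != i) al s a ^+ 2) * u ^+ 2 =
      \sum_a \sum_(s | s != i) al s a ^+ 2 * u ^+ 2.
    by rewrite mulr_suml; apply: eq_bigr => a _; rewrite mulr_suml.
  have h2 : 2 * (\sum_a \sum_(s | s != i) al s a * be s a) * u =
      \sum_a \sum_(s | s != i) 2 * (al s a * be s a) * u.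
    by rewrite mulr_sumr mulr_suml; apply: eq_bigr => a _; rewrite mulr_sumr mulr_suml.
  have h3 : \sum_a \sum_(s | s != i) (u * al s a - be s a) ^+ 2 =
     \sum_a \sum_(s | s != i) al s a ^+ 2 * u ^+ 2
     - \sum_a \sum_(s | s != i) 2 * (al s a * be s a) * u
     + \sum_a \sum_(s | s != i) be s a ^+ 2.
    rewrite -sumrB -big_split; apply: eq_bigr => a _.
    rewrite -sumrB -big_split; apply: eq_bigr => s _ /=; ring.
  rewrite mulrDl h1 h2 h3; ring.
have pos_term : forall (g : S -> A -> R), (forall s a, 0 < g s a) ->
    0 < \sum_a \sum_(s | s != i) g s a.
  move=> g gp; rewrite (bigD1 a0) //= (bigD1 j) //=.
  have h1 := gp j a0.
  have h2 : 0 <= \sum_(s | (s != i) && (s != j)) g s a0.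
    by apply: sumr_ge0 => s _; exact: ltW.
  have h3 : 0 <= \sum_(a | a != a0) \sum_(s | s != i) g s a.
    by apply: sumr_ge0 => a _; apply: sumr_ge0 => s _; exact: ltW.
  lra.
have cA0 : 0 < cA.
  have := pos_term (fun s a => al s a ^+ 2) (fun s a => exprn_gt0 _ (alp s a)).
  rewrite /cA; lra.
have cB0 : 0 < cB by apply: pos_term => s a; exact: mulr_gt0.
have cC0 : 0 < cC by apply: pos_term => s a; exact: exprn_gt0.
have [hD|hD] := ltP 0 (cA * cC - cB ^+ 2).
  left; exists ((cA * cC - cB ^+ 2) / cA); first by rewrite divr_gt0.
  move=> u; rewrite -/(F u) eF ler_pdivrMr // .
  have := sqr_ge0 (cA * u - cB); nra.
right; exists (cB / cA); first by rewrite divr_gt0.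
have Fle : F (cB / cA) <= 0.
  rewrite eF; have -> : cA * (cB / cA) ^+ 2 - 2 * cB * (cB / cA) + cC = (cA * cC - cB ^+ 2) / cA.
    by field; rewrite gt_eqF.
  by rewrite pmulr_lle0 // invr_gt0.
set u0 := cB / cA in Fle *.
have t1 : 0 <= \sum_a \sum_(s | s != i) (u0 * al s a - be s a) ^+ 2.
  by apply: sumr_ge0 => a _; apply: sumr_ge0 => s _; exact: sqr_ge0.
have t2 : 0 <= u0 ^+ 2 * E by rewrite mulr_ge0 // sqr_ge0.
have z1 : \sum_a \sum_(s | s != i) (u0 * al s a - be s a) ^+ 2 = 0 by rewrite /F in Fle; lra.
have z2 : u0 ^+ 2 * E = 0 by rewrite /F in Fle; lra.
split; last first.
  move/eqP: z2; rewrite mulf_eq0 expf_eq0 /= => /orP[/eqP h|/eqP //].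
  by move: (divr_gt0 cB0 cA0); rewrite -/u0 h ltxx.
move=> s a si.
move/eqP: z1; rewrite psumr_eq0; last by move=> b _; apply: sumr_ge0 => t _; exact: sqr_ge0.
move=> /allP /(_ a (mem_index_enum a)) /=.
rewrite psumr_eq0; last by move=> t _; exact: sqr_ge0.
move=> /allP /(_ s (mem_index_enum s)); rewrite si /= sqrf_eq0 subr_eq0 => /eqP //.
Qed.


Lemma marg_ge0 (R : realType) (S A X : finType) (mu : S -> R) (p : S -> A -> S -> R)
  (qq : S -> X -> R) (pi : X -> A -> R) k :
  (forall s, 0 <= mu s) -> (forall s a t, 0 <= p s a t) -> (forall s y, 0 <= qq s y) ->
  (forall y a, 0 <= pi y a) -> forall s y, 0 <= marg mu p qq pi k s y.
Proof.
move=> h1 h2 h3 h4; elim: k => [|k IH] s y /=; first exact: mulr_ge0.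
apply: sumr_ge0 => s0 _; apply: sumr_ge0 => y0 _; apply: sumr_ge0 => a _.
by rewrite !mulr_ge0.
Qed.

Lemma qt_ge0 (R : realType) (S X : finType) (q : S -> X -> R) (f : X -> S) x j c s y :
  (forall s y, 0 <= q s y) -> q (f x) x <= 1 -> 0 <= c -> c * q (f x) x <= 1 ->
  0 <= qtilde q f x j c s y.
Proof.
move=> q0 qx1 c0 cq1; rewrite /qtilde.
case: ifP => _; first by case: ifP => _; [rewrite mulr_ge0 | case: ifP => _; rewrite ?mulr_ge0 // subr_ge0].
case: ifP => _ //; case: ifP => _ //; case: ifP => _ //.
by rewrite divr_ge0 // subr_ge0.
Qed.

Lemma qt_sum (R : realType) (S X : finType) (q : S -> X -> R) (f : X -> S) x j c s :
  (forall s, \sum_y q s y = 1) -> (forall s y, f y != s -> q s y = 0) ->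
  j != f x -> s != f x ->
  \sum_(y | gdec f x j y == s) qtilde q f x j c s y = 1.
Proof.
move=> qs qsupp jx sx.
rewrite big_mkcond /=.
have [sj|sj] := eqVneq s j.
  subst s; rewrite (bigD1 x) //= /gdec /qtilde !eqxx /=.
  rewrite (eq_bigr (fun y => (1 - c * q (f x) x) * q j y)); last first.
    move=> y yx; rewrite (negbTE yx).
    case: (eqVneq (f y) j) => fy //.
    by rewrite (qsupp j y fy) mulr0.
  rewrite -mulr_sumr.
  have -> : \sum_(y | y != x) q j y = 1.
    have := qs j; rewrite (bigD1 x) //= (qsupp j x) ?add0r //; by rewrite eq_sym.
  ring.
rewrite -(qs s); apply: eq_bigr => y _.
rewrite /gdec /qtilde (negbTE sj) (negbTE sx).
case: (eqVneq y x) => [->|yx].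
  by rewrite eq_sym (negbTE sj) (qsupp s x) // eq_sym.
by case: (eqVneq (f y) s) => fy //; rewrite (qsupp s y fy).
Qed.

Lemma pda_ge0 (R : realType) (S A X : finType) (mu : S -> R) (p : S -> A -> S -> R)
  (qq : S -> X -> R) (g : X -> S) (pi : X -> A -> R) k s a :
  (forall s, 0 <= mu s) -> (forall s a t, 0 <= p s a t) -> (forall s y, 0 <= qq s y) ->
  (forall y a, 0 <= pi y a) -> 0 <= prob_dec_act mu p qq g pi k s a.
Proof.
move=> h1 h2 h3 h4; apply: sumr_ge0 => s0 _; apply: sumr_ge0 => y _.
by rewrite mulr_ge0 // marg_ge0.
Qed.

Lemma mvisit_ge0 (R : realType) (S A X : finType) (H : nat) (mu : S -> R) (p : S -> A -> S -> R)
  (qq : S -> X -> R) (g : X -> S) (pi : X -> A -> R) s a :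
  (forall s, 0 <= mu s) -> (forall s a t, 0 <= p s a t) -> (forall s y, 0 <= qq s y) ->
  (forall y a, 0 <= pi y a) -> 0 <= mvisit H mu p qq g pi s a.
Proof.
move=> h1 h2 h3 h4; rewrite /mvisit mulr_ge0 ?invr_ge0 //.
by apply: sumr_ge0 => k _; apply: pda_ge0.
Qed.

Lemma mvisit_lb (R : realType) (S A X : finType) (H : nat) (mu : S -> R) (p : S -> A -> S -> R)
  (qq : S -> X -> R) (g : X -> S) (pi : X -> A -> R) (e : R) s a :
  (2 <= H)%N ->
  (forall s, 0 <= mu s) -> (forall s a t, 0 <= p s a t) -> (forall s y, 0 <= qq s y) ->
  (forall y a, 0 <= pi y a) -> (forall y a, e <= pi y a) ->
  \sum_(y | g y == s) qq s y = 1 ->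
  (H.-1)%:R^-1 * (mu s * e) <= mvisit H mu p qq g pi s a.
Proof.
move=> H2 h1 h2 h3 h4 he hs.
rewrite /mvisit; case: H H2 => [|[|h]] // _ /=.
rewrite ler_pM2l ?invr_gt0 ?ltr0n //.
rewrite big_ord_recl.
have r0 : 0 <= \sum_(i < h) prob_dec_act mu p qq g pi (bump 0 i) s a.
  by apply: sumr_ge0 => k _; apply: pda_ge0.
suff : mu s * e <= prob_dec_act mu p qq g pi 0 s a by lra.
rewrite /prob_dec_act (bigD1 s) //=.
have r1 : 0 <= \sum_(s0 | s0 != s) \sum_(y | g y == s) mu s0 * qq s0 y * pi y a.
  by apply: sumr_ge0 => s0 _; apply: sumr_ge0 => y _; rewrite !mulr_ge0.
suff : mu s * e <= \sum_(y | g y == s) mu s * qq s y * pi y a by lra.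
rewrite -[X in X <= _]mulr1 -hs mulr_sumr.
apply: ler_sum => y _.
rewrite mulrAC; apply: ler_wpM2l; [by rewrite mulr_ge0 | exact: he].
Qed.


Lemma fin_min (R : realType) (T : finType) (h : T -> R) :
  (forall t, 0 < h t) -> exists2 e : R, 0 < e & forall t, e <= h t.
Proof.
move=> hp; exists (\big[Num.min/1]_t h t).
  by apply: (big_ind (fun v => 0 < v)) => // u v u0 v0; rewrite lt_min u0 v0.
move=> t; rewrite (bigD1 t) //= ge_min lexx //.
Qed.

Lemma t13_lb (R : realType) (c qx pj pi m : R) :
  0 < c -> 0 < qx -> qx <= 1 -> c * qx <= 1 -> 0 < pj <= 1 -> 0 < pi < 1 -> 0 <= m ->
  m * (qx * (Num.sqrt c * Num.sqrt pj - Num.sqrt pi) ^+ 2) <=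
  c * qx * pj * m * ln (c * pj / pi) + (1 - c * qx * pj) * m * ln ((1 - c * qx * pj) / (1 - qx * pi)).
Proof.
move=> c0 q0 q1 cq1 /andP[pj0 pj1] /andP[pi0 pi1] m0.
have a0 : 0 <= c * qx * pj <= 1.
  apply/andP; split; first by rewrite !mulr_ge0 // ltW.
  have : c * qx * pj <= c * qx * 1 by apply: ler_wpM2l => //; rewrite mulr_ge0 // ltW.
  lra.
have b0 : 0 < qx * pi < 1.
  apply/andP; split; first by rewrite mulr_gt0.
  have : qx * pi <= 1 * pi by apply: ler_wpM2r => //; exact: ltW.
  lra.
have := @bern_lb R _ _ a0 b0.
have -> : c * qx * pj / (qx * pi) = c * pj / pi by field; rewrite !gt_eqF.
have -> : (Num.sqrt (c * qx * pj) - Num.sqrt (qx * pi)) ^+ 2 =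
          qx * (Num.sqrt c * Num.sqrt pj - Num.sqrt pi) ^+ 2.
  rewrite !sqrtrM ?mulr_ge0 ?ltW //.
  have sq : Num.sqrt qx ^+ 2 = qx by rewrite sqr_sqrtr // ltW.
  transitivity (Num.sqrt qx ^+ 2 * (Num.sqrt c * Num.sqrt pj - Num.sqrt pi) ^+ 2); first ring.
  by rewrite sq.
move=> h.
have := ler_wpM2l m0 h.
set L1 := ln _; set L2 := ln _.
move=> h2; apply: (le_trans h2); rewrite le_eqVlt; apply/orP; left; apply/eqP; ring.
Qed.

Theorem proposition14 (R : realType) (S A X : finType) (H : nat)
    (mu : S -> R) (p : S -> A -> S -> R) (q : S -> X -> R) (f : X -> S)
    (pi : X -> A -> R) :
  (2 <= H)%N ->
  block_mdp mu p q f pi ->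
  (forall s, 0 < mu s) ->
  (forall y, 0 < q (f y) y) ->
  (forall y a, 0 < pi y a) ->
  (exists (gamma : R) (nu : S -> A -> R),
      0 < gamma /\ full_support_dist nu /\ separable p nu gamma) ->
  forall x : X, (0 < Irate H mu p q f pi x)%E.
Proof.
move=> H2 [[mu0 mus] [pd [ppos [qd [qsupp pid]]]]] mupos qpos pipos.
move=> [gam [nu [g0 [[nupos nusum] sep]]]] x.
have p0 : forall s a t, 0 <= p s a t by move=> s a t; exact: (pd s a).1.
have ps : forall s a, \sum_t p s a t = 1 by move=> s a; exact: (pd s a).2.
have q0 : forall s y, 0 <= q s y by move=> s y; exact: (qd s).1.
have qs : forall s, \sum_y q s y = 1 by move=> s; exact: (qd s).2.
have pi0 : forall y a, 0 <= pi y a by move=> y a; exact: (pid y).1.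
have pis : forall y, \sum_a pi y a = 1 by move=> y; exact: (pid y).2.
have qx0 : 0 < q (f x) x := qpos x.
have qx1 : q (f x) x <= 1.
  have := qs (f x); rewrite (bigD1 x) //=.
  have : 0 <= \sum_(y | y != x) q (f x) y by apply: sumr_ge0 => y _.
  lra.
have [e e0 he] : exists2 e : R, 0 < e & forall y a, e <= pi y a.
  have [e e0 he] := @fin_min R (X * A)%type (fun ya => pi ya.1 ya.2) (fun ya => pipos ya.1 ya.2).
  by exists e => // y a; exact: (he (y, a)).
have [mm mm0 hmm] := @fin_min R S mu mupos.
have [a0 _] : exists a : A, true.
  case: (pickP (@predT A)) => [a0 _|h]; first by exists a0.
  by move: (pis x); rewrite big_pred0 // => /eqP; rewrite eq_sym oner_eq0.
have p_lt1 : forall s a t t', t != t' -> p s a t < 1.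
  move=> s a t t' tt; have tt' : t' != t by rewrite eq_sym.
  have := ps s a; rewrite (bigD1 t) //= (bigD1 t') //=.
  have := ppos s a t'.
  have : 0 <= \sum_(k | (k != t) && (k != t')) p s a k by apply: sumr_ge0 => k _.
  lra.
set m0 := (H.-1)%:R^-1 * (mm * e).
have m00 : 0 < m0.
  by rewrite /m0 mulr_gt0 ?invr_gt0 ?ltr0n ?mulr_gt0 //; clear m0; case: H H2 => [|[|h]].
rewrite /Irate.
apply: (big_ind (fun v => (0 < v)%E)) => //.
  by move=> u v u0 v0; rewrite lt_min u0 v0.
move=> j ji.
suff [eps eps0 heps] : exists2 eps : R, 0 < eps &
    forall c, 0 < c -> (eps%:E <= Irate_j H mu p q f pi x j c)%E.
  apply: (@lt_le_trans _ _ eps%:E); first by rewrite lte_fin.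
  by apply/ereal_infP => _ [c c0 <-]; exact: heps.
pose al := fun s a => Num.sqrt (p s a j).
pose be := fun s a => Num.sqrt (p s a (f x)).
pose E := \sum_a \sum_s (Num.sqrt (p j a s) - Num.sqrt (p (f x) a s)) ^+ 2.
have E0 : 0 <= E by apply: sumr_ge0 => a _; apply: sumr_ge0 => s _; exact: sqr_ge0.
have alp : forall s a, 0 < al s a by move=> s a; rewrite sqrtr_gt0.
have bep : forall s a, 0 < be s a by move=> s a; rewrite sqrtr_gt0.
case: (@quad_lemma R S A (f x) j a0 al be E ji alp bep E0) => [[d d0 hd]|[u0 u00 [hu hE]]]; last first.
  have hpe : forall a s, p j a s = p (f x) a s.
    move=> a s; move/eqP: hE; rewrite psumr_eq0; last first.
      by move=> b _; apply: sumr_ge0 => t _; exact: sqr_ge0.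
    move=> /allP /(_ a (mem_index_enum a)) /=.
    rewrite psumr_eq0; last by move=> t _; exact: sqr_ge0.
    move=> /allP /(_ s (mem_index_enum s)) /=; rewrite sqrf_eq0 subr_eq0 => /eqP h.
    by rewrite -(sqr_sqrtr (p0 j a s)) h sqr_sqrtr.
  have hs : forall s a, s != f x -> p s a (f x) = u0 ^+ 2 * p s a j.
    move=> s a sx; have := hu s a sx; rewrite /al /be => h.
    by rewrite -(sqr_sqrtr (p0 s a (f x))) -h exprMn sqr_sqrtr.
  have hp : forall s a, p s a (f x) = u0 ^+ 2 * p s a j.
    move=> s a; case: (eqVneq s (f x)) => [->|sx]; last exact: hs.
    by rewrite -hpe hs // hpe.
  have Dpos : 0 < \sum_t \sum_b p t b j * nu t b.
    rewrite (bigD1 j) //= (bigD1 a0) //=.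
    have := mulr_gt0 (ppos j a0 j) (nupos j a0).
    have : 0 <= \sum_(b | b != a0) p j b j * nu j b.
      by apply: sumr_ge0 => b _; rewrite mulr_ge0 // ltW.
    have : 0 <= \sum_(t | t != j) \sum_b p t b j * nu t b.
      by apply: sumr_ge0 => t _; apply: sumr_ge0 => b _; rewrite mulr_ge0 // ltW.
    lra.
  have hb : forall s a, bnu p nu (f x) s a = bnu p nu j s a.
    move=> s a; rewrite /bnu.
    have -> : \sum_t \sum_b p t b (f x) * nu t b = u0 ^+ 2 * \sum_t \sum_b p t b j * nu t b.
      rewrite mulr_sumr; apply: eq_bigr => t _; rewrite mulr_sumr; apply: eq_bigr => b _.
      by rewrite hp mulrA.
    by rewrite hp; field; rewrite !gt_eqF.
  have hne : f x != j by rewrite eq_sym.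
  have := sep (f x) j hne.
  under eq_bigr => s _ do under eq_bigr => a _ do rewrite hb subrr normr0.
  rewrite big1 => [|s _]; last by rewrite big1.
  move=> h; exfalso; lra.
exists (#|X|%:R * (m0 * q (f x) x * d)).
  have cx : (0 < #|X|)%N by apply/card_gt0P; exists x.
  apply: mulr_gt0; first by rewrite ltr0n.
  by apply: mulr_gt0 => //; apply: mulr_gt0.
move=> c c0; rewrite /Irate_j /=.
case: ifP => cq; last by rewrite leey.
rewrite lee_fin ler_wpM2l ?ler0n //.
set mv := mvisit H mu p (qtilde q f x j c) (gdec f x j) pi.
have qt0 : forall s y, 0 <= qtilde q f x j c s y.
  by move=> s y; apply: qt_ge0 => //; exact: ltW.
have mv0 : forall s a, 0 <= mv s a.
  by move=> s a; apply: mvisit_ge0 => // s0; exact: ltW.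
have mvlb : forall s a, s != f x -> m0 <= mv s a.
  move=> s a sx; apply: le_trans (@mvisit_lb R S A X H mu p (qtilde q f x j c) (gdec f x j) pi e s a H2 mu0 p0 qt0 pi0 he (@qt_sum R S X q f x j c s qs qsupp ji sx)).
  rewrite /m0 ler_wpM2l ?invr_ge0 ?ler0n // ler_wpM2r ?hmm //; exact: ltW.
have hd' := hd (Num.sqrt c).
apply: le_trans (_ : m0 * q (f x) x * (\sum_a \sum_(s | s != f x) (Num.sqrt c * al s a - be s a) ^+ 2 + Num.sqrt c ^+ 2 * E) <= _).
  by rewrite ler_wpM2l // mulr_ge0 // ltW.
have LHS_eq : m0 * q (f x) x * (\sum_a \sum_(s | s != f x) (Num.sqrt c * al s a - be s a) ^+ 2 + Num.sqrt c ^+ 2 * E)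
   = \sum_a (\sum_(s | s != f x) m0 * (q (f x) x * (Num.sqrt c * al s a - be s a) ^+ 2)
             + c * q (f x) x * m0 * \sum_s (Num.sqrt (p j a s) - Num.sqrt (p (f x) a s)) ^+ 2).
  rewrite sqr_sqrtr ?(ltW c0) // /E mulrDr big_split /=; congr (_ + _).
    rewrite mulr_sumr; apply: eq_bigr => a _; rewrite mulr_sumr; apply: eq_bigr => s _; ring.
  rewrite -mulr_sumr; ring.
rewrite LHS_eq; apply: ler_sum => a _.
set T13 := fun s => c * q (f x) x * p s a j * mv s a * ln (c * p s a j / p s a (f x)) +
      (1 - c * q (f x) x * p s a j) * mv s a *
      ln ((1 - c * q (f x) x * p s a j) / (1 - q (f x) x * p s a (f x))).
set T2 := fun s => c * q (f x) x * mv j a * p j a s * ln (p j a s / p (f x) a s).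
rewrite [X in _ <= X](eq_bigr (fun s => T13 s + T2 s)); last by move=> s _; rewrite /T13 /T2; ring.
rewrite big_split /=; apply: lerD.
  rewrite big_mkcond /=; apply: ler_sum => s _.
  have hs : mv s a * (q (f x) x * (Num.sqrt c * Num.sqrt (p s a j) - Num.sqrt (p s a (f x))) ^+ 2) <= T13 s.
    apply: t13_lb => //.
    - by rewrite ppos ltW // (p_lt1 s a j (f x)).
    - by rewrite ppos (p_lt1 s a (f x) j) // eq_sym.
  have sq0 : 0 <= q (f x) x * (Num.sqrt c * Num.sqrt (p s a j) - Num.sqrt (p s a (f x))) ^+ 2.
    by rewrite mulr_ge0 ?sqr_ge0 // ltW.
  case: ifP => sx; last by apply: le_trans hs; rewrite mulr_ge0.
  apply: le_trans hs; rewrite /al /be ler_wpM2r //; exact: mvlb.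
have -> : \sum_s T2 s = c * q (f x) x * mv j a * \sum_s p j a s * ln (p j a s / p (f x) a s).
  by rewrite mulr_sumr; apply: eq_bigr => s _; rewrite /T2; ring.
have cq0 : 0 <= c * q (f x) x by rewrite mulr_ge0 // ltW.
have Y0 : 0 <= \sum_s (Num.sqrt (p j a s) - Num.sqrt (p (f x) a s)) ^+ 2.
  by apply: sumr_ge0 => s _; exact: sqr_ge0.
apply: le_trans (_ : c * q (f x) x * mv j a * \sum_s (Num.sqrt (p j a s) - Num.sqrt (p (f x) a s)) ^+ 2 <= _).
  by rewrite ler_wpM2r // ler_wpM2l // mvlb.
apply: ler_wpM2l; first by rewrite mulr_ge0.
by apply: (@kl_lb R S (p j a) (p (f x) a)).
Qed.
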